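(* For the iterates of SONATA with step-size $\alpha\in(0,1]$ under Assumptions (A), (B), (C), (W), and assuming $D_{\max}>0$, for every $\nu\ge0$: $$\alpha\|d^\nu\|^2\ge\frac{\mu}{D_{\max}^2}\Big(p^{\nu+1}-(1-\alpha)p^\nu-\frac\alpha\mu\|\delta^\nu\|^2\Big).$$
   Context: Problem (P): minimize $U=F+G$ over $\mathcal K$, $F=\frac1m\sum_{i=1}^mf_i$. (A): $\mathcal K\subseteq\mathbb R^d$ nonempty closed convex; $f_i$ twice differentiable convex on open $\mathcal O\supseteq\mathcal K$; $\mu I\preceq\nabla^2F\preceq LI$ on $\mathcal K$ ($\mu>0$, $L<\infty$); $G$ convex on $\mathcal K$; $x^\star$ unique minimizer, $U^\star=U(x^\star)$. (B): connected undirected graph on $\{1,\dots,m\}$, edges $\mathcal E$. (W): $w_{ii}>0$; for $i\ne j$, $w_{ij}>0$ iff $(i,j)\in\mathcal E$, else 0; $W$ doubly stochastic. (C): $\tilde f_i:\mathcal O\times\mathcal O\to\mathbb R$ $C^2$, $\nabla\tilde f_i(x;x)=\nabla f_i(x)$, $\nabla\tilde f_i(\cdot;x)$ Lipschitz, $\tilde f_i(\cdot;x)$ strongly convex on $\mathcal K$ for all $x\in\mathcal K$; constants $D_i^\ell\le D_i^u$ with $D_i^\ell I\preceq\nabla^2\tilde f_i(x;y)-\nabla^2F(x)\preceq D_i^uI$ on $\mathcal K\times\mathcal K$; $D_{\max}=\max_i\max\{|D_i^\ell|,|D_i^u|\}$. SONATA: $x_i^0\in\mathcal K$, $y_i^0=\nabla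 f_i(x_i^0)$; $\hat x_i^\nu=\arg\min_{x_i\in\mathcal K}\tilde f_i(x_i;x_i^\nu)+(y_i^\nu-\nabla f_i(x_i^\nu))^\top(x_i-x_i^\nu)+G(x_i)$; $d_i^\nu=\hat x_i^\nu-x_i^\nu$; $x_i^{\nu+1/2}=x_i^\nu+\alpha d_i^\nu$; $x_i^{\nu+1}=\sum_jw_{ij}x_j^{\nu+1/2}$; $y_i^{\nu+1}=\sum_jw_{ij}(y_j^\nu+\nabla f_j(x_j^{\nu+1})-\nabla f_j(x_j^\nu))$. $d^\nu$ and $\delta^\nu$ stack $d_i^\nu$ and $\delta_i^\nu=\nabla F(x_i^\nu)-y_i^\nu$; $p^\nu=\sum_i(U(x_i^\nu)-U^\star)$. *)

(* Defs.v *)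
From mathcomp Require Import all_boot all_order all_algebra.
From mathcomp Require Import all_classical all_reals all_analysis.
Import numFieldNormedType.Exports.
Set Implicit Arguments. Unset Strict Implicit. Unset Printing Implicit Defensive.
Import Order.TTheory GRing.Theory Num.Theory.
Local Open Scope ring_scope.
Local Open Scope classical_set_scope.

Section Defs.
Variables (R : realType) (d : nat).
Local Notation V := 'rV[R]_d.

Definition dotv (u v : V) : R := (u *m v^T) 0 0.
Definition sqn (v : V) : R := dotv v v.
Definition enorm (v : V) : R := Num.sqrt (sqn v).

Definition convex_set_euc (S : set V) : Prop :=
  forall u v (t : R), S u -> S v -> 0 <= t <= 1 -> S (t *: u + (1 - t) *: v).

Definition convex_fun_on (S : set V) (h : V -> R) : Prop :=
  forall u v, (forall t : R, 0 <= t <= 1 -> S (t *: u + (1 - t) *: v)) ->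
  forall t : R, 0 <= t <= 1 ->
    h (t *: u + (1 - t) *: v) <= t * h u + (1 - t) * h v.

Definition strongly_convex_on (S : set V) (h : V -> R) : Prop :=
  exists c : R, 0 < c /\
  forall u v (t : R), S u -> S v -> 0 <= t <= 1 ->
    h (t *: u + (1 - t) *: v) <=
      t * h u + (1 - t) * h v - c / 2 * t * (1 - t) * sqn (u - v).

Definition lipschitz_on_euc (S : set V) (g : V -> V) : Prop :=
  exists Lc : R, forall u v, S u -> S v -> enorm (g u - g v) <= Lc * enorm (u - v).

(* Loewner order against scalar multiples of the identity:
   a I <= H  and  H <= b I  *)
Definition scal_le_mx (a : R) (H : 'M[R]_d) : Prop :=
  forall v : V, a * sqn v <= dotv (v *m H) v.
Definition mx_le_scal (H : 'M[R]_d) (b : R) : Prop :=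
  forall v : V, dotv (v *m H) v <= b * sqn v.

Definition has_grad (h : V -> R) (x : V) (g : V) : Prop :=
  is_diff x h (fun v : V => dotv v g).
Definition has_hess (g : V -> V) (x : V) (H : 'M[R]_d) : Prop :=
  is_diff x g (fun v : V => v *m H).

End Defs.

(* Main.v *)
Require Import Defs.
From mathcomp Require Import all_boot all_order all_algebra.
From mathcomp Require Import all_classical all_reals all_analysis.
From mathcomp Require Import ring lra.
Import numFieldNormedType.Exports.
Import Order.TTheory GRing.Theory Num.Theory.
Local Open Scope ring_scope.
Local Open Scope classical_set_scope.

Module Helpers.
Set Implicit Arguments. Unset Strict Implicit. Unset Printing Implicit Defensive.
Section Basics.
Variables (R : realType) (d : nat).
Local Notation V := 'rV[R]_d.
Implicit Types u v w : V.

Lemma dotvE u v : dotv u v = \sum_j u 0 j * v 0 j.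
Proof. by rewrite /dotv !mxE; apply: eq_bigr => j _; rewrite mxE. Qed.
Lemma dotvC u v : dotv u v = dotv v u.
Proof. by rewrite !dotvE; apply: eq_bigr => j _; rewrite mulrC. Qed.
Lemma dotvDl u w v : dotv (u + w) v = dotv u v + dotv w v.
Proof. by rewrite !dotvE -big_split; apply: eq_bigr => j _; rewrite mxE mulrDl. Qed.
Lemma dotvZl (a : R) u v : dotv (a *: u) v = a * dotv u v.
Proof. by rewrite !dotvE mulr_sumr; apply: eq_bigr => j _; rewrite mxE mulrA. Qed.
Lemma dotvNl u v : dotv (- u) v = - dotv u v.
Proof. by rewrite -scaleN1r dotvZl mulN1r. Qed.
Lemma dotvBl u w v : dotv (u - w) v = dotv u v - dotv w v.
Proof. by rewrite dotvDl dotvNl. Qed.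
Lemma dotvDr u w v : dotv v (u + w) = dotv v u + dotv v w.
Proof. by rewrite !(dotvC v) dotvDl. Qed.
Lemma dotvZr (a : R) u v : dotv v (a *: u) = a * dotv v u.
Proof. by rewrite !(dotvC v) dotvZl. Qed.
Lemma dotvNr u v : dotv v (- u) = - dotv v u.
Proof. by rewrite !(dotvC v) dotvNl. Qed.
Lemma dotvBr u w v : dotv v (u - w) = dotv v u - dotv v w.
Proof. by rewrite !(dotvC v) dotvBl. Qed.
Lemma dotv0l v : dotv 0 v = 0.
Proof. by rewrite dotvE big1 // => j _; rewrite mxE mul0r. Qed.
Lemma dotv0r v : dotv v 0 = 0.
Proof. by rewrite dotvC dotv0l. Qed.
Lemma sqn_ge0 v : 0 <= sqn v.
Proof. by rewrite /sqn dotvE sumr_ge0 // => j _; rewrite -expr2 sqr_ge0. Qed.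
Lemma dotv_sumr (I : Type) (r : seq I) (P : pred I) (F : I -> V) v :
  dotv v (\sum_(i <- r | P i) F i) = \sum_(i <- r | P i) dotv v (F i).
Proof.
elim/big_rec2: _ => [|i y1 y2 _ <-]; first by rewrite dotv0r.
by rewrite dotvDr.
Qed.
Lemma dotv_suml (I : Type) (r : seq I) (P : pred I) (F : I -> V) v :
  dotv (\sum_(i <- r | P i) F i) v = \sum_(i <- r | P i) dotv (F i) v.
Proof. rewrite dotvC dotv_sumr; apply: eq_bigr => i _; exact: dotvC. Qed.
End Basics.

Section Calc.
Variables (R : realType) (d : nat).
Local Notation V := 'rV[R]_d.

Lemma is_diff_derive (W : normedModType R) (f : V -> W) p df w :
  is_diff p f df -> is_derive p w f (df w).
Proof.
move=> H; apply: DeriveDef; first exact: diff_derivable.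
by rewrite deriveE // diff_val.
Qed.

Lemma is_derive_ext (W : normedModType R) (f g : V -> W) p w df :
  f =1 g -> is_derive p w f df -> is_derive p w g df.
Proof. by move=> /funext <-. Qed.

Lemma derive_line (W : normedModType R) (f : V -> W) a w s df :
  is_derive (a + s *: w) w f df -> is_derive s 1 (fun t : R => f (a + t *: w)) df.
Proof.
case=> H1 H2.
have E : (fun h : R => h^-1 *: (((fun t : R => f (a + t *: w)) \o shift s) (h *: 1)
     - f (a + s *: w))) =
   (fun h : R => h^-1 *: ((f \o shift (a + s *: w)) (h *: w) - f (a + s *: w))).
  apply/funext => h /=; congr (_ *: (f _ - _)).
  rewrite /shift /= -[h%:A]/(h * 1) mulr1 scalerDl addrCA.
  by [].
apply: DeriveDef; first by rewrite /derivable E.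
by rewrite /derive E.
Qed.

Lemma derive_dotv (g : V -> V) p w dg v :
  is_derive p w g dg -> is_derive p w (fun q => dotv (g q) v) (dotv dg v).
Proof.
move=> [H1 H2].
have co j : is_derive p w (fun q => g q 0 j) (dg 0 j).
  have := H1; move/derivable_mxP => /(_ 0 j) Hj.
  split => //; move: H2; rewrite derive_mx // => <-; by rewrite mxE.
have := @is_derive_sum _ _ _ d (fun j => (v 0 j) \*: (fun q => g q 0 j)) p w
  (fun j => v 0 j *: dg 0 j) (fun j => is_deriveZ _ (co j)).
have -> : \sum_(j < d) v 0 j *: dg 0 j = dotv dg v.
  by rewrite dotvE; apply: eq_bigr => j _; rewrite mulrC.
apply: is_derive_ext => q; rewrite fct_sumE dotvE; apply: eq_bigr => j _.
by rewrite /= mulrC.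
Qed.

Lemma MVT_seg (f df : R -> R) (a b : R) : a <= b ->
  (forall s : R, a <= s <= b -> is_derive s 1 f (df s)) ->
  exists2 c, a <= c <= b & f b - f a = df c * (b - a).
Proof.
move=> ab H.
have h1 : forall x, x \in `]a, b[%R -> is_derive x 1 f (df x).
  by move=> s; rewrite in_itv /= => /andP[h1 h2]; apply: H; rewrite !ltW.
have h2 : {within `[a, b], continuous f}.
  apply: continuous_in_subspaceT => s; rewrite inE /= in_itv /= => sab.
  have [Hd _] := H s sab.
  exact/differentiable_continuous/derivable1_diffP.
have [c cab E] := MVT_segment ab h1 h2.
by exists c => //; move: cab; rewrite in_itv.
Qed.

Lemma dnbhs_right (f : R -> R) (l : R) : f x @[x --> (0:R)^'] --> l -> f x @[x --> (0:R)^'+] --> l.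
Proof.
move=> H A /H /nbhs_ballP [e e0 He].
by exists e => //= y ye; rewrite lt_def => /andP [yne _]; apply: He.
Qed.

End Calc.

Section Cartan.
Variables (R : realType) (d : nat).
Local Notation V := 'rV[R]_d.

Lemma diff_eps (W : normedModType R) (g : V -> W) p dg : is_diff p g dg ->
  forall eps : R, 0 < eps -> exists2 r : R, 0 < r &
    forall z : V, `|z| < r -> `|g (p + z) - g p - dg z| <= eps * `|z|.
Proof.
move=> H eps e0.
have Hdf : differentiable g p by exact: ex_diff.
have := diff_locally Hdf.
rewrite diff_val => Hd; have Ho := proj1 (eqaddoP _ _ _ _) Hd; have /nbhs_norm0P [r r0 Hr] := Ho eps e0.
exists r => // z zr; have := Hr z zr.
by rewrite !fctE /= opprD addrA [z + p]addrC.
Qed.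


Lemma coord_le (u : V) j : `|u 0 j| <= `|u|.
Proof.
rewrite [leRHS]/Num.Def.normr /= mx_normrE.
by apply: le_trans (le_bigmax _ _ (0, j)).
Qed.

Lemma dotv_norm (u e : V) : `|dotv u e| <= d%:R * (`|u| * `|e|).
Proof.
rewrite dotvE; apply: le_trans (ler_norm_sum _ _ _) _.
apply: le_trans (_ : \sum_(j < d) (`|u| * `|e|) <= _).
  apply: ler_sum => j _; rewrite normrM.
  by apply: ler_pM => //; apply: coord_le.
by rewrite sumr_const card_ord mulr_natl.
Qed.

Lemma open_ball (O : set V) p : open O -> O p ->
  exists2 r : R, 0 < r & forall z : V, `|z| < r -> O (p + z).
Proof.
move=> oO Op; have : nbhs p O by apply: open_nbhs_nbhs.
move=> /nbhs0P /nbhs_norm0P [r r0 Hr]; exists r => // z zr; exact: Hr.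
Qed.


Lemma is_derive_ext' (U W : normedModType R) (f g : U -> W) p w df :
  f =1 g -> is_derive p w f df -> is_derive p w g df.
Proof. by move=> /funext <-. Qed.

Lemma half (f : V -> R) (g : V -> V) (H : 'M[R]_d) (O : set V) (p u w : V) (eps r t : R) :
  (forall q, O q -> has_grad f q (g q)) -> 0 < eps ->
  (forall z : V, `|z| < r -> O (p + z)) ->
  (forall z : V, `|z| < r -> `|g (p + z) - g p - z *m H| <= eps * `|z|) ->
  0 < t -> t * (`|u| + `|w|) < r ->
  `|f (p + t *: u + t *: w) - f (p + t *: u) - f (p + t *: w) + f p - t^+2 * dotv (w *m H) u|
    <= t^+2 * (eps * (d%:R * (`|u| * (2 * `|u| + `|w|)))).
Proof.
move=> Hg e0 HO He t0 tr.
set a1 := p + t *: w.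
pose k := fun s : R => f (a1 + s *: u) - f (p + s *: u).
pose dk := fun s : R => dotv u (g (a1 + s *: u)) - dotv u (g (p + s *: u)).
have nu0 := normr_ge0 u; have nw0 := normr_ge0 w.
have nz1 s : 0 <= s <= t -> `|t *: w + s *: u| <= t * (`|u| + `|w|).
  move=> /andP[s0 st]; apply: le_trans (ler_normD _ _) _.
  rewrite !normrZ !ger0_norm ?(ltW t0) //; nra.
have nz2 s : 0 <= s <= t -> `|s *: u| <= t * `|u|.
  move=> /andP[s0 st]; rewrite normrZ ger0_norm //; nra.
have Hk s : 0 <= s <= t -> is_derive s 1 k (dk s).
  move=> st.
  have O1 : O (a1 + s *: u).
    rewrite /a1 -addrA; apply: HO; exact: le_lt_trans (nz1 s st) tr.
  have O2 : O (p + s *: u).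
    apply: HO; apply: le_lt_trans (nz2 s st) _; apply: le_lt_trans tr; nra.
  have D1 := derive_line (is_diff_derive u (Hg _ O1)).
  have D2 := derive_line (is_diff_derive u (Hg _ O2)).
  exact: is_derive_ext' (is_deriveB D1 D2).
have [xi xit E] := MVT_seg (ltW t0) Hk.
have Ek : k t - k 0 = f (p + t *: u + t *: w) - f (p + t *: u) - f (p + t *: w) + f p.
  rewrite /k /a1 !scale0r !addr0 [p + t *: w + _]addrAC; lra.
set z1 := t *: w + xi *: u.
set z2 := xi *: u.
set e1 := g (p + z1) - g p - z1 *m H.
set e2 := g (p + z2) - g p - z2 *m H.
have G1 : g (p + z1) = e1 + g p + z1 *m H by rewrite /e1 addrAC subrK subrK.
have G2 : g (p + z2) = e2 + g p + z2 *m H by rewrite /e2 addrAC subrK subrK.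
have Edk : dk xi = t * dotv (w *m H) u + (dotv u e1 - dotv u e2).
  rewrite /dk /a1 -addrA -/z1 -/z2 G1 G2 !dotvDr /z1 mulmxDl -!scalemxAl !dotvDr !dotvZr.
  rewrite (dotvC u (w *m H)); lra.
have xi0 : 0 <= xi <= t by [].
have B1 : `|dotv u e1| <= d%:R * (`|u| * (eps * (t * (`|u| + `|w|)))).
  apply: le_trans (dotv_norm _ _) _.
  apply: ler_wpM2l => //; apply: ler_wpM2l => //.
  apply: le_trans (He _ _) _; first exact: le_lt_trans (nz1 _ xi0) tr.
  by apply: ler_wpM2l; [exact: ltW | exact: nz1].
have B2 : `|dotv u e2| <= d%:R * (`|u| * (eps * (t * `|u|))).
  apply: le_trans (dotv_norm _ _) _.
  apply: ler_wpM2l => //; apply: ler_wpM2l => //.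
  apply: le_trans (He _ _) _.
    by apply: le_lt_trans (nz2 _ xi0) _; apply: le_lt_trans tr; nra.
  by apply: ler_wpM2l; [exact: ltW | exact: nz2].
rewrite -Ek E Edk subr0.
have -> : (t * dotv (w *m H) u + (dotv u e1 - dotv u e2)) * t - t ^+ 2 * dotv (w *m H) u
  = t * (dotv u e1 - dotv u e2) by rewrite expr2; lra.
rewrite normrM ger0_norm ?(ltW t0) //.
have Bt : `|dotv u e1 - dotv u e2| <= `|dotv u e1| + `|dotv u e2|.
  by apply: le_trans (ler_normB _ _) _.
have D0 : 0 <= (d%:R : R) by [].
set A1 := `|dotv u e1| in B1 Bt *; set A2 := `|dotv u e2| in B2 Bt *.
set Z := `|dotv u e1 - dotv u e2| in Bt *.
rewrite expr2; nra.
Qed.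


Lemma small_zero (x C : R) : (forall eps : R, 0 < eps -> `|x| <= eps * C) -> x = 0.
Proof.
move=> H; have C0 : 0 <= C.
  have := H 1 ltr01; rewrite mul1r; apply: le_trans; exact: normr_ge0.
apply/eqP; rewrite -normr_eq0 eq_le normr_ge0 andbT.
apply/ler_addgt0Pr => e e0; rewrite add0r.
have e1 : 0 < e / (C + 1) by apply: divr_gt0 => //; lra.
apply: le_trans (H _ e1) _.
rewrite mulrAC ler_pdivrMr; last lra.
nra.
Qed.

Lemma hess_sym (O : set V) (f : V -> R) (g : V -> V) (H : V -> 'M[R]_d) :
  open O -> (forall q, O q -> has_grad f q (g q) /\ has_hess g q (H q)) ->
  forall p, O p -> forall u w : V, dotv (u *m H p) w = dotv (w *m H p) u.
Proof.
move=> oO Hq p Op u w.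
have [r0 r00 HO] := open_ball oO Op.
have Hg q : O q -> has_grad f q (g q) by case/Hq.
have Hh := (Hq p Op).2.
have nu0 := normr_ge0 u; have nw0 := normr_ge0 w.
apply/eqP; rewrite -subr_eq0; apply/eqP.
apply: (@small_zero _ (d%:R * (`|u| * (2 * `|u| + `|w|)) + d%:R * (`|w| * (2 * `|w| + `|u|)))) => eps e0.
have [r1 r10 He] := diff_eps Hh e0.
set r := Num.min r0 r1.
have r0' : 0 < r by rewrite lt_min r00 r10.
have rr0 : r <= r0 by rewrite ge_min lexx.
have rr1 : r <= r1 by rewrite ge_min lexx orbT.
set t := r / (2 * (`|u| + `|w| + 1)).
have t0 : 0 < t by apply: divr_gt0 => //; lra.
have tr : t * (`|u| + `|w|) < r.
  rewrite /t mulrAC ltr_pdivrMr; last lra.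
  nra.
have tr' : t * (`|w| + `|u|) < r by rewrite addrC.
have HO' z : `|z| < r -> O (p + z) by move=> zr; apply: HO; exact: lt_le_trans zr rr0.
have He' z : `|z| < r -> `|g (p + z) - g p - z *m H p| <= eps * `|z|.
  by move=> zr; apply: He; exact: lt_le_trans zr rr1.
have h1 := half (u := u) (w := w) Hg e0 HO' He' t0 tr.
have h2 := half (u := w) (w := u) Hg e0 HO' He' t0 tr'.
rewrite [p + t *: w + t *: u]addrAC in h2.
set X := f (p + t *: u + t *: w) - f (p + t *: u) - f (p + t *: w) + f p in h1.
have EX : f (p + t *: u + t *: w) - f (p + t *: w) - f (p + t *: u) + f p = X.
  by rewrite /X; lra.
rewrite EX in h2.
set B1 := dotv (u *m H p) w in h2 *.
set B2 := dotv (w *m H p) u in h1 *.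
set c1 := d%:R * (`|u| * (2 * `|u| + `|w|)) in h1 *.
set c2 := d%:R * (`|w| * (2 * `|w| + `|u|)) in h2 *.
have T : t ^+ 2 * `|B1 - B2| <= t ^+ 2 * (eps * c1) + t ^+ 2 * (eps * c2).
  have -> : t ^+ 2 * `|B1 - B2| = `|(X - t ^+ 2 * B2) - (X - t ^+ 2 * B1)|.
    have -> : X - t ^+ 2 * B2 - (X - t ^+ 2 * B1) = t ^+ 2 * (B1 - B2).
      by rewrite mulrBr; lra.
    by rewrite normrM ger0_norm // sqr_ge0.
  apply: le_trans (ler_normB _ _) _; exact: lerD.
rewrite -mulrDr in T.
have t2 : 0 < t ^+ 2 by apply: exprn_gt0.
by rewrite -(ler_pM2l t2) mulrDr.
Qed.

End Cartan.

Section Analysis.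
Variables (R : realType) (d : nat).
Local Notation V := 'rV[R]_d.

Lemma seg_in (K : set V) u z (s : R) : convex_set_euc K -> K u -> K z -> 0 <= s <= 1 ->
  K (u + s *: (z - u)).
Proof.
move=> cK Ku Kz s01.
have := cK z u s Kz Ku s01.
by rewrite scalerBl scale1r scalerBr addrCA addrC.
Qed.

Lemma opt_ineq (K : set V) (h : V -> R) (G : V -> R) xh z dh :
  convex_set_euc K -> K xh -> convex_fun_on K G ->
  (forall z, K z -> h xh + G xh <= h z + G z) -> K z ->
  is_derive xh (z - xh) h dh -> G xh - G z <= dh.
Proof.
move=> cK Kxh cG Hmin Kz [Hd1 Hd2].
set w := z - xh.
have key t : 0 < t -> t <= 1 ->
    G xh - G z <= t^-1 *: ((h \o shift xh) (t *: w) - h xh).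
  move=> t0 t1.
  have t01 : 0 <= t <= 1 by rewrite (ltW t0) t1.
  have Kt : K (xh + t *: w) by apply: seg_in.
  have cvx := cG z xh (fun s s01 => cK z xh s Kz Kxh s01) t t01.
  have E : t *: z + (1 - t) *: xh = xh + t *: w.
    by rewrite /w scalerBl scale1r scalerBr addrCA addrC.
  rewrite E in cvx.
  have := Hmin _ Kt.
  rewrite /= [t *: w + xh]addrC /GRing.scale /=.
  move=> Hm.
  rewrite ler_pdivlMl //; nra.
rewrite -Hd2 /derive cvg_at_rightE; last exact: Hd1.
apply: limr_ge; first by apply/cvg_ex; exists ('D_w h xh); apply: dnbhs_right; exact: Hd1.
near=> t; apply: key.
  by near: t; exact: nbhs_right_gt.
by apply: ltW; near: t; exact: nbhs_right_lt ltr01.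
Unshelve. all: by end_near.
Qed.


Lemma sqnD (a b : V) : sqn (a + b) = sqn a + 2 * dotv a b + sqn b.
Proof. by rewrite /sqn dotvDl !dotvDr (dotvC b a); lra. Qed.
Lemma sqnB (a b : V) : sqn (a - b) = sqn a - 2 * dotv a b + sqn b.
Proof. by rewrite /sqn dotvBl !dotvBr (dotvC b a); lra. Qed.
Lemma sqnZ (c : R) (a : V) : sqn (c *: a) = c ^+ 2 * sqn a.
Proof. by rewrite /sqn dotvZl dotvZr mulrA expr2. Qed.

Lemma polar (M : 'M[R]_d) (D : R) (a b : V) :
  (forall u v : V, dotv (u *m M) v = dotv (v *m M) u) ->
  (forall u : V, `|dotv (u *m M) u| <= D * sqn u) ->
  dotv (a *m M) b <= D / 2 * (sqn a + sqn b).
Proof.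
move=> Hs Hb.
have E1 : dotv ((a + b) *m M) (a + b) =
    dotv (a *m M) a + 2 * dotv (a *m M) b + dotv (b *m M) b.
  by rewrite mulmxDl dotvDl !dotvDr (Hs b a); lra.
have E2 : dotv ((a - b) *m M) (a - b) =
    dotv (a *m M) a - 2 * dotv (a *m M) b + dotv (b *m M) b.
  by rewrite mulmxBl dotvBl !dotvBr (Hs b a); lra.
have H1 := le_trans (ler_norm _) (Hb (a + b)).
have H2 := Hb (a - b).
rewrite -normrN in H2; have H2' := le_trans (ler_norm _) H2.
rewrite E1 sqnD in H1; rewrite E2 sqnB in H2'.
lra.
Qed.

Lemma sc_lower (K O : set V) (h : V -> R) (gh : V -> V) (Hh : V -> 'M[R]_d) (mu : R) u z :
  convex_set_euc K -> K `<=` O ->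
  (forall q w, O q -> is_derive q w h (dotv w (gh q))) ->
  (forall q w v, O q -> is_derive q w (fun q => dotv (gh q) v) (dotv (w *m Hh q) v)) ->
  (forall q, K q -> forall v, mu * sqn v <= dotv (v *m Hh q) v) ->
  K u -> K z -> h u + dotv (z - u) (gh u) + mu / 2 * sqn (z - u) <= h z.
Proof.
move=> cK KO Dh DH Hmu Ku Kz.
set w := z - u.
have Ks (s : R) : 0 <= s <= 1 -> K (u + s *: w) by move=> s01; apply: seg_in.
pose phi1 := fun s : R => dotv (gh (u + s *: w)) w.
have D1 (s : R) : 0 <= s <= 1 -> is_derive s 1 (fun s => h (u + s *: w)) (phi1 s).
  move=> s01; apply: derive_line; rewrite /phi1 dotvC; apply: Dh; apply: KO; exact: Ks.
have D2 (s : R) : 0 <= s <= 1 -> is_derive s 1 phi1 (dotv (w *m Hh (u + s *: w)) w).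
  move=> s01; apply: (derive_line (f := fun q => dotv (gh q) w)); apply: DH; apply: KO; exact: Ks.
have sw0 := sqn_ge0 w.
have P1 (s : R) : 0 <= s <= 1 -> mu * sqn w * s <= phi1 s - phi1 0.
  move=> /andP[s0 s1].
  have [c /andP[c0 cs] E] := @MVT_seg _ phi1 (fun s => dotv (w *m Hh (u + s *: w)) w) 0 s s0
    (fun r r0s => D2 r ltac:(case/andP: r0s => r0 rs; rewrite r0 /=; exact: le_trans rs s1)).
  rewrite E subr0.
  have := Hmu _ (Ks c ltac:(rewrite c0 /=; exact: le_trans cs s1)) w.
  move=> Hc; nra.
pose chi := fun s : R => h (u + s *: w) - phi1 0 * s - mu * sqn w / 2 * (s * s).
have D3 (s : R) : 0 <= s <= 1 -> is_derive s 1 chi (phi1 s - phi1 0 - mu * sqn w * s).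
  move=> s01.
  have I1 := is_deriveZ (phi1 0) (is_derive_id s (1 : R)).
  have I2 := is_deriveM (is_derive_id s (1 : R)) (is_derive_id s (1 : R)).
  have I3 := is_deriveZ (mu * sqn w / 2) I2.
  have I4 := is_deriveB (is_deriveB (D1 s s01) I1) I3.
  apply: is_derive_eq.
  rewrite -[(phi1 0)%:A]/(phi1 0 * 1) -[s%:A]/(s * 1) -[_ *: (_ + _)]/(_ * (_ + _)).
  by rewrite !mulr1; lra.
have [c /andP[c0 c1] E] := @MVT_seg _ chi _ 0 1 ler01 D3.
have := P1 c ltac:(by rewrite c0 c1).
rewrite /chi !scale0r !scale1r !addr0 [u + w]addrC subrK mul0r !mulr0 !subr0 mulr1 in E.
rewrite /phi1 scale0r addr0 in E.
rewrite /phi1 scale0r addr0 dotvC -/w => P.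
rewrite !(dotvC w) in P *; rewrite !mulr1 in E.
lra.
Qed.


Lemma grad_diff (K O : set V) (gp : V -> V) (Hp : V -> 'M[R]_d) (D c : R) x xh v :
  convex_set_euc K -> K `<=` O ->
  (forall q w v, O q -> is_derive q w (fun q => dotv (gp q) v) (dotv (w *m Hp q) v)) ->
  (forall q, K q -> forall a b : V, dotv (a *m Hp q) b = dotv (b *m Hp q) a) ->
  (forall q, K q -> forall a : V, `|dotv (a *m Hp q) a| <= D * sqn a) ->
  0 < c -> K x -> K xh ->
  dotv v (gp xh - gp x) <= D / 2 * (c * sqn (xh - x) + sqn v / c).
Proof.
move=> cK KO DH Hs Hb c0 Kx Kxh.
set dd := xh - x.
have Ks (s : R) : 0 <= s <= 1 -> K (x + s *: dd) by move=> s01; apply: seg_in.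
pose phi := fun s : R => dotv (gp (x + s *: dd)) v.
have D1 (s : R) : 0 <= s <= 1 -> is_derive s 1 phi (dotv (dd *m Hp (x + s *: dd)) v).
  move=> s01; apply: (derive_line (f := fun q => dotv (gp q) v)); apply: DH; apply: KO; exact: Ks.
have [r /andP[r0 r1] E] := @MVT_seg _ phi _ 0 1 ler01 D1.
have Kr := Ks r ltac:(by rewrite r0 r1).
rewrite /phi scale0r scale1r addr0 /dd [x + (xh - x)]addrC subrK subr0 mulr1 -/dd in E.
rewrite dotvC dotvBl E.
have P : dotv ((c *: dd) *m Hp (x + r *: dd)) v <= D / 2 * (sqn (c *: dd) + sqn v).
  by apply: polar; [exact: Hs | exact: Hb].
rewrite -scalemxAl dotvZl sqnZ in P.
have cn : c != 0 by rewrite gt_eqF.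
rewrite -(ler_pM2l c0).
apply: le_trans P _.
rewrite le_eqVlt; apply/orP; left; apply/eqP; field; exact: cn.
Qed.

End Analysis.

Section Jensen.
Variables (R : realType) (d : nat).
Local Notation V := 'rV[R]_d.

Lemma sum0_weights (I : eqType) (r : seq I) (c : I -> R) :
  (forall j, 0 <= c j) -> \sum_(j <- r) c j = 0 -> forall j, j \in r -> c j = 0.
Proof.
move=> c0; elim: r => [|a r IH] //.
rewrite big_cons => S j.
have Sr : 0 <= \sum_(j <- r) c j by apply: sumr_ge0 => i _.
have := c0 a => ca.
rewrite in_cons => /orP[/eqP->|jr]; first lra.
by apply: IH => //; lra.
Qed.

Lemma jensen (K : set V) (U : V -> R) (I : eqType) (r : seq I) (c : I -> R) (p : I -> V) :
  convex_set_euc K ->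
  (forall a b (t : R), K a -> K b -> 0 <= t <= 1 ->
     U (t *: a + (1 - t) *: b) <= t * U a + (1 - t) * U b) ->
  (forall j, 0 <= c j) -> \sum_(j <- r) c j = 1 -> (forall j, K (p j)) ->
  K (\sum_(j <- r) c j *: p j) /\ U (\sum_(j <- r) c j *: p j) <= \sum_(j <- r) c j * U (p j).
Proof.
move=> cK cU; elim: r c => [|a r IH] c c0 S1 Kp.
  by move: S1; rewrite big_nil => /eqP; rewrite eq_sym oner_eq0.
rewrite !big_cons; rewrite big_cons in S1.
have Sr0 : 0 <= \sum_(j <- r) c j by apply: sumr_ge0 => j _.
have ca0 := c0 a.
case: (c a =P 1) => [ca1|ca1].
  have Sr : \sum_(j <- r) c j = 0 by lra.
  have Z := sum0_weights c0 Sr.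
  have E1 : \sum_(j <- r) c j *: p j = 0 by rewrite big1_seq // => j /= /Z ->; rewrite scale0r.
  have E2 : \sum_(j <- r) c j * U (p j) = 0 by rewrite big1_seq // => j /= /Z ->; rewrite mul0r.
  rewrite E1 E2.
  by rewrite ca1 scale1r mul1r !addr0; split.
pose t := 1 - c a.
have ca1' : c a < 1 by rewrite lt_neqAle; apply/andP; split; [apply/eqP | lra].
have t0 : 0 < t by rewrite /t; lra.
pose c' := fun j => c j / t.
have c'0 j : 0 <= c' j by apply: divr_ge0 => //; exact: ltW.
have S1' : \sum_(j <- r) c' j = 1.
  rewrite /c' -mulr_suml; have -> : \sum_(j <- r) c j = t by rewrite /t; lra.
  by rewrite mulfV ?gt_eqF.
have [Kq Uq] := IH c' c'0 S1' Kp.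
set q := \sum_(j <- r) c' j *: p j in Kq Uq.
have Eq : \sum_(j <- r) c j *: p j = t *: q.
  rewrite /q scaler_sumr; apply: eq_bigr => j _.
  by rewrite scalerA /c' mulrCA mulfV ?gt_eqF // mulr1.
have EU : \sum_(j <- r) c j * U (p j) = t * \sum_(j <- r) c' j * U (p j).
  rewrite mulr_sumr; apply: eq_bigr => j _.
  by rewrite /c' mulrA mulrCA mulfV ?gt_eqF // mulr1.
rewrite Eq EU /t.
have ca01 : 0 <= c a <= 1 by rewrite ca0 ltW.
split; first exact: cK.
apply: le_trans (cU _ _ _ (Kp a) Kq ca01) _.
rewrite lerD2l; apply: ler_wpM2l => //; lra.
Qed.

End Jensen.

End Helpers.
Import Helpers.

Theorem lemma3p2 (R : realType) (d m : nat)
  (* (A) *)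
  (K O : set 'rV[R]_d)
  (f : 'I_m -> 'rV[R]_d -> R) (gf : 'I_m -> 'rV[R]_d -> 'rV[R]_d)
  (Hf : 'I_m -> 'rV[R]_d -> 'M[R]_d)
  (G : 'rV[R]_d -> R) (mu L : R) (xstar : 'rV[R]_d)
  (* (B), (W) *)
  (E : rel 'I_m) (W : 'M[R]_m)
  (* (C) *)
  (ft : 'I_m -> 'rV[R]_d -> 'rV[R]_d -> R)
  (gft : 'I_m -> 'rV[R]_d -> 'rV[R]_d -> 'rV[R]_d)
  (Hft : 'I_m -> 'rV[R]_d -> 'rV[R]_d -> 'M[R]_d)
  (Dl Du : 'I_m -> R)
  (* SONATA *)
  (alpha : R)
  (x y xh : nat -> 'I_m -> 'rV[R]_d) :
  let F := fun z => m%:R^-1 * \sum_(i < m) f i z in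
  let gradF := fun z => m%:R^-1 *: \sum_(i < m) gf i z in
  let HF := fun z => m%:R^-1 *: \sum_(i < m) Hf i z in
  let U := fun z => F z + G z in
  let Dmax := \big[Num.max/0]_(i < m) Num.max `|Dl i| `|Du i| in
  (* (A) *)
  (0 < m)%N ->
  (exists z, K z) -> closed K -> convex_set_euc K ->
  open O -> K `<=` O ->
  (forall i z, O z -> has_grad (f i) z (gf i z) /\ has_hess (gf i) z (Hf i z)) ->
  (forall i, convex_fun_on O (f i)) ->
  0 < mu ->
  (forall z, K z -> scal_le_mx mu (HF z) /\ mx_le_scal (HF z) L) ->
  convex_fun_on K G ->
  K xstar -> (forall z, K z -> U xstar <= U z) ->
  (forall z, K z -> U z <= U xstar -> z = xstar) ->
  (* (B) *)
  symmetric E -> (forall i j, connect E i j) ->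
  (* (W) *)
  (forall i, 0 < W i i) ->
  (forall i j, i != j -> (0 < W i j <-> E i j)) ->
  (forall i j, i != j -> ~~ E i j -> W i j = 0) ->
  (forall i j, 0 <= W i j) ->
  (forall i, \sum_(j < m) W i j = 1) ->
  (forall j, \sum_(i < m) W i j = 1) ->
  (* (C) *)
  (forall i u z, O u -> O z ->
     has_grad (fun u => ft i u z) u (gft i u z) /\ has_hess (fun u => gft i u z) u (Hft i u z)) ->
  (forall i z, O z -> gft i z z = gf i z) ->
  (forall i z, K z -> lipschitz_on_euc K (fun u => gft i u z)) ->
  (forall i z, K z -> strongly_convex_on K (fun u => ft i u z)) ->
  (forall i, Dl i <= Du i) ->
  (forall i u z, K u -> K z ->
     scal_le_mx (Dl i) (Hft i u z - HF u) /\ mx_le_scal (Hft i u z - HF u) (Du i)) ->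
  (* step size and D_max *)
  0 < alpha <= 1 ->
  0 < Dmax ->
  (* SONATA iterates *)
  (forall i, K (x 0%N i)) ->
  (forall i, y 0%N i = gf i (x 0%N i)) ->
  (forall nu i, K (xh nu i) /\
     forall z, K z ->
       ft i (xh nu i) (x nu i) + dotv (y nu i - gf i (x nu i)) (xh nu i - x nu i) + G (xh nu i)
       <= ft i z (x nu i) + dotv (y nu i - gf i (x nu i)) (z - x nu i) + G z) ->
  (forall nu i, x nu.+1 i =
     \sum_(j < m) W i j *: (x nu j + alpha *: (xh nu j - x nu j))) ->
  (forall nu i, y nu.+1 i =
     \sum_(j < m) W i j *: (y nu j + gf j (x nu.+1 j) - gf j (x nu j))) ->
  forall nu : nat,
    let dsq := \sum_(i < m) sqn (xh nu i - x nu i) in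
    let deltasq := \sum_(i < m) sqn (gradF (x nu i) - y nu i) in
    let p := fun n : nat => \sum_(i < m) (U (x n i) - U xstar) in
    alpha * dsq >=
      mu / Dmax ^+ 2 * (p nu.+1 - (1 - alpha) * p nu - alpha / mu * deltasq).
Proof.
move=> F gradF HF U Dmax m0 Kne Kcl cK oO KO Hfi cvxf mu0 HFb cG Kxs Umin Uuniq
  Esym Econn Wii Wpos Wz W0 Wrow Wcol Hftd Hgft Lip SCft Dlu HDb al Dm0 Kx0 y0 Hxh Hx Hy nu.
cbv zeta.
have DF : forall q w, O q -> is_derive q w F (dotv w (gradF q)).
  move=> q w Oq.
  have Hi i : is_derive q w (f i) (dotv w (gf i q)) := is_diff_derive w (Hfi i q Oq).1.
  have I1 := is_deriveZ (m%:R^-1) (is_derive_sum Hi).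
  apply: is_derive_eq.
    apply: is_derive_ext' I1 => z.
    by rewrite /F fct_sumE /GRing.scale /=.
  by rewrite /gradF dotvZr dotv_sumr.
have DgF : forall q w v, O q ->
    is_derive q w (fun q => dotv (gradF q) v) (dotv (w *m HF q) v).
  move=> q w v Oq.
  have Hi i : is_derive q w (fun q => dotv (gf i q) v) (dotv (w *m Hf i q) v).
    exact: derive_dotv (is_diff_derive w (Hfi i q Oq).2).
  have I1 := is_deriveZ (m%:R^-1) (is_derive_sum Hi).
  apply: is_derive_eq.
    apply: is_derive_ext' I1 => z.
    by rewrite /gradF fct_sumE /GRing.scale /= dotvZl dotv_suml.
  by rewrite /HF -scalemxAr mulmx_sumr dotvZl dotv_suml.
have Dft : forall i z q w, O z -> O q ->
    is_derive q w (fun u => ft i u z) (dotv w (gft i q z)).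
  by move=> i z q w Oz Oq; exact: is_diff_derive w (Hftd i q z Oq Oz).1.
have Dgft : forall i z q w v, O z -> O q ->
    is_derive q w (fun u => dotv (gft i u z) v) (dotv (w *m Hft i q z) v).
  by move=> i z q w v Oz Oq; exact: derive_dotv (is_diff_derive w (Hftd i q z Oq Oz).2).
have symHF : forall q, O q -> forall a b : 'rV[R]_d,
    dotv (a *m HF q) b = dotv (b *m HF q) a.
  move=> q Oq a b; rewrite /HF -!scalemxAr !mulmx_sumr !dotvZl !dotv_suml.
  congr (_ * _); apply: eq_bigr => i _.
  exact: (hess_sym oO (Hfi i) Oq).
have symHft : forall i z q, O z -> O q -> forall a b : 'rV[R]_d,
    dotv (a *m Hft i q z) b = dotv (b *m Hft i q z) a.
  move=> i z q Oz Oq a b.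
  exact: (hess_sym oO (fun u Ou => Hftd i u z Ou Oz) Oq).
have cU : forall a b (t : R), K a -> K b -> 0 <= t <= 1 ->
    U (t *: a + (1 - t) *: b) <= t * U a + (1 - t) * U b.
  move=> a b t Ka Kb t01.
  have segK : forall s : R, 0 <= s <= 1 -> K (s *: a + (1 - s) *: b).
    by move=> s s01; exact: cK.
  have segO : forall s : R, 0 <= s <= 1 -> O (s *: a + (1 - s) *: b).
    by move=> s s01; apply: KO; exact: segK.
  have HFc : F (t *: a + (1 - t) *: b) <= t * F a + (1 - t) * F b.
    rewrite /F.
    have H1 : \sum_(i < m) f i (t *: a + (1 - t) *: b) <=
        \sum_(i < m) (t * f i a + (1 - t) * f i b).
      by apply: ler_sum => i _; exact: cvxf.
    rewrite big_split /= -!mulr_sumr in H1.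
    have m0' : 0 <= m%:R^-1 :> R by rewrite invr_ge0.
    apply: le_trans (ler_wpM2l m0' H1) _.
    by rewrite le_eqVlt; apply/orP; left; apply/eqP; ring.
  have HG := cG a b segK t t01.
  rewrite /U /= !mulrDr; lra.
have a01 : 0 <= alpha <= 1 by case/andP: al => /ltW -> ->.
have Khalf : forall n j, K (x n j) -> K (x n j + alpha *: (xh n j - x n j)).
  by move=> n j Kj; apply: seg_in => //; exact: (Hxh n j).1.
have Kx : forall n i, K (x n i).
  elim=> [|n IH] i; first exact: Kx0.
  rewrite Hx.
  have J := jensen (p := fun j => x n j + alpha *: (xh n j - x n j)) cK cU (W0 i) (Wrow i)
    (fun j => Khalf n j (IH j)).
  exact: J.1.
have perI : forall i, U (xh nu i) - U xstar <=
    Dmax ^+ 2 / mu * sqn (xh nu i - x nu i) + sqn (gradF (x nu i) - y nu i) / mu.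
  move=> i.
  have Kxi := Kx nu i.
  have [Kxhi Hmin] := Hxh nu i.
  set xi := x nu i in Kxi Hmin *.
  set xhi := xh nu i in Kxhi Hmin *.
  set yi := y nu i in Hmin *.
  have Oxi := KO _ Kxi; have Oxhi := KO _ Kxhi.
  set v := xstar - xhi.
  set c0 := yi - gf i xi in Hmin.
  have Ocv : convex_fun_on K (fun u => G u + dotv c0 (u - xi)).
    move=> a b sab t t01 /=; have := cG a b sab t t01 => HG.
    have Lid : dotv c0 (t *: a + (1 - t) *: b - xi) =
        t * dotv c0 (a - xi) + (1 - t) * dotv c0 (b - xi).
      by rewrite !dotvBr !dotvDr !dotvZr; ring.
    rewrite Lid !mulrDr; lra.
  have Om : forall z, K z -> (fun u => ft i u xi) xhi + (fun u => G u + dotv c0 (u - xi)) xhi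
      <= (fun u => ft i u xi) z + (fun u => G u + dotv c0 (u - xi)) z.
    by move=> z Kz /=; have := Hmin z Kz; lra.
  have OPT := opt_ineq cK Kxhi Ocv Om Kxs (Dft i xi xhi (xstar - xhi) Oxi Oxhi).
  rewrite /= -/v in OPT.
  have SC := sc_lower cK KO DF DgF (fun q Kq => (HFb q Kq).1) Kxhi Kxs.
  rewrite -/v in SC.
  have Mi : Num.max `|Dl i| `|Du i| <= Dmax by exact: (le_bigmax _ (fun j => Num.max `|Dl j| `|Du j|) i).
  have DlD : `|Dl i| <= Dmax by apply: le_trans Mi; rewrite le_max lexx.
  have DuD : `|Du i| <= Dmax by apply: le_trans Mi; rewrite le_max lexx orbT.
  have Dbound : forall q, K q -> forall a : 'rV[R]_d,
      `|dotv (a *m (Hft i q xi - HF q)) a| <= Dmax * sqn a.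
    move=> q Kq a; have [lo hi] := HDb i q xi Kq Kxi.
    have l := lo a; have h := hi a; have s0 := sqn_ge0 a.
    move: DlD DuD; rewrite !ler_norml => /andP[d1 d2] /andP[d3 d4]; apply/andP; split; nra.
  have DHp : forall q w v', O q -> is_derive q w (fun q => dotv (gft i q xi - gradF q) v')
      (dotv (w *m (Hft i q xi - HF q)) v').
    move=> q w v' Oq.
    have I := is_deriveB (Dgft i xi q w v' Oxi Oq) (DgF q w v' Oq).
    apply: is_derive_eq.
      apply: is_derive_ext' I => z /=.
      by rewrite dotvBl.
    by rewrite mulmxBr dotvBl.
  have symp : forall q, K q -> forall a b : 'rV[R]_d,
      dotv (a *m (Hft i q xi - HF q)) b = dotv (b *m (Hft i q xi - HF q)) a.
    move=> q Kq a b; rewrite !mulmxBr !dotvBl.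
    by rewrite (symHft i xi q Oxi (KO _ Kq)) (symHF q (KO _ Kq)).
  have cpos : 0 < 2 * Dmax / mu by apply: divr_gt0 => //; lra.
  have GD := grad_diff v cK KO DHp symp Dbound cpos Kxi Kxhi.
  rewrite (Hgft i xi Oxi) in GD.
  have Cval : Dmax / 2 * (2 * Dmax / mu * sqn (xhi - xi) + sqn v / (2 * Dmax / mu)) =
      Dmax ^+ 2 / mu * sqn (xhi - xi) + mu / 4 * sqn v.
    by field; apply/andP; split; apply: lt0r_neq0.
  rewrite Cval in GD.
  set dl := gradF xi - yi.
  have NEG : - dotv v dl <= mu / 4 * sqn v + sqn dl / mu.
    have := sqn_ge0 (mu / 2 *: v + dl); rewrite sqnD sqnZ dotvZl => H0.
    rewrite -(ler_pM2l mu0).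
    have -> : mu * (mu / 4 * sqn v + sqn dl / mu) = (mu / 2) ^+ 2 * sqn v + sqn dl.
      by field; apply: lt0r_neq0.
    have E2 : 2 * (mu / 2 * dotv v dl) = mu * dotv v dl by field.
    rewrite mulrN; lra.
  have L1 : dotv c0 (xhi - xi) - dotv c0 (xstar - xi) = - dotv v yi + dotv v (gf i xi).
    rewrite -dotvBr (_ : xhi - xi - (xstar - xi) = - v); last first.
      by rewrite /v; apply/rowP => k; rewrite !mxE; lra.
    by rewrite dotvNr dotvC /c0 dotvBr; lra.
  rewrite !dotvBr in GD.
  rewrite /dl dotvBr in NEG.
  rewrite /U /=.
  lra.
have Jen : \sum_(i < m) (U (x nu.+1 i) - U xstar) <=
    (1 - alpha) * \sum_(i < m) (U (x nu i) - U xstar) + alpha * \sum_(i < m) (U (xh nu i) - U xstar).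
  pose xhf := fun j => x nu j + alpha *: (xh nu j - x nu j).
  have hf j : U (xhf j) - U xstar <=
      (1 - alpha) * (U (x nu j) - U xstar) + alpha * (U (xh nu j) - U xstar).
    have Ej : alpha *: xh nu j + (1 - alpha) *: x nu j = xhf j.
      by rewrite /xhf scalerBl scale1r scalerBr addrCA addrC.
    have := cU _ _ _ (Hxh nu j).1 (Kx nu j) a01; rewrite Ej => HH.
    have -> : (1 - alpha) * (U (x nu j) - U xstar) + alpha * (U (xh nu j) - U xstar)
      = alpha * U (xh nu j) + (1 - alpha) * U (x nu j) - U xstar by ring.
    lra.
  have rowi i : U (x nu.+1 i) - U xstar <= \sum_(j < m) W i j * (U (xhf j) - U xstar).
    rewrite Hx.
    have J := jensen (p := xhf) cK cU (W0 i) (Wrow i) (fun j => Khalf nu j (Kx nu j)).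
    have -> : \sum_(j < m) W i j * (U (xhf j) - U xstar) =
        \sum_(j < m) W i j * U (xhf j) - U xstar.
      rewrite (eq_bigr (fun j => W i j * U (xhf j) - W i j * U xstar)); last first.
        by move=> j _; rewrite mulrBr.
      by rewrite sumrB -mulr_suml Wrow mul1r.
    by rewrite lerD2r; exact: J.2.
  apply: le_trans (ler_sum _ (fun i _ => rowi i)) _.
  rewrite exchange_big /=.
  have -> : \sum_(j < m) \sum_(i < m) W i j * (U (xhf j) - U xstar) =
      \sum_(j < m) (U (xhf j) - U xstar).
    by apply: eq_bigr => j _; rewrite -mulr_suml Wcol mul1r.
  apply: le_trans (ler_sum _ (fun j _ => hf j)) _.
  by rewrite big_split /= -!mulr_sumr.
have S : \sum_(i < m) (U (xh nu i) - U xstar) <=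
    Dmax ^+ 2 / mu * \sum_(i < m) sqn (xh nu i - x nu i) +
    (\sum_(i < m) sqn (gradF (x nu i) - y nu i)) / mu.
  apply: le_trans (ler_sum _ (fun i _ => perI i)) _.
  by rewrite big_split /= -mulr_sumr -mulr_suml.
set P1 := \sum_(i < m) (U (x nu.+1 i) - U xstar) in Jen *.
set P0 := \sum_(i < m) (U (x nu i) - U xstar) in Jen *.
set SU := \sum_(i < m) (U (xh nu i) - U xstar) in Jen S *.
set DS := \sum_(i < m) sqn (xh nu i - x nu i) in S *.
set DQ := \sum_(i < m) sqn (gradF (x nu i) - y nu i) in S *.
have al0 : 0 <= alpha by case/andP: al => /ltW.
have aS := ler_wpM2l al0 S.
have inner : P1 - (1 - alpha) * P0 - alpha / mu * DQ <= alpha * (Dmax ^+ 2 / mu) * DS.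
  rewrite mulrDr in aS.
  have -> : alpha / mu * DQ = alpha * (DQ / mu) by rewrite mulrA mulrAC.
  rewrite -mulrA; lra.
have c0 : 0 <= mu / Dmax ^+ 2 by apply: divr_ge0; [exact: ltW | exact: sqr_ge0].
apply: le_trans (ler_wpM2l c0 inner) _.
rewrite le_eqVlt; apply/orP; left; apply/eqP.
field; apply/andP; split; [exact: lt0r_neq0 | exact: lt0r_neq0].
Qed.
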